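(* Let $N\ge1$, $n\ge1$, $\gamma>0$, and let channel gains $g_{S,k}>0$, $g_{k,D}>0$ ($k=1,\dots,N$) satisfy $g_{S,1}\le\cdots\le g_{S,N}$. With $C_{a,b}=\tfrac12\log(1+g_{a,b}\gamma)$ and $V_{a,b}=V(g_{a,b}\gamma)$, $V(\rho)=\frac{\rho}{2}\frac{2+\rho}{(1+\rho)^2}(\log e)^2$, define for $1\le i\le N$, $1\le j\le N$: $$a_{ij}=\sqrt{\tfrac{V_{S,i}}{V_{S,j}}},\quad b_{ij}=\sqrt{\tfrac{n}{V_{S,j}}}(C_{S,j}-C_{S,i}),\quad a_{i(N+1)}=\sqrt{\tfrac{V_{S,i}}{V_{i,D}}},\quad b_{i(N+1)}=\sqrt{\tfrac{n}{V_{i,D}}}(C_{i,D}-C_{S,i}),\quad c_i=\sqrt{V_{S,i}}.$$ Let $\varepsilon_d'\in(0,\tfrac12)$ and let $v_0$ be the optimal objective value of the problem $$\min \sum_{i=1}^N c_ix_i\quad\text{s.t.}\quad \sum_{i=1}^N\sum_{j=i}^{N+1}Q(a_{ij}x_i+b_{ij})-\varepsilon_d'=0,\quad x_i\ge0\ (i=1,\dots,N).$$ Let $x_1\in\mathbb{R}$ be the solution of $\sum_{i=1}^N\sum_{j=i}^{N+1}Q(a_{ij}x+b_{ij})-\varepsilon_d'=0$. Then $$v_1\le v_0\le v_2,\qquad v_1=Q^{-1}(\varepsilon_d')\sum_{i=1}^N c_i,\quad v_2=x_1\sum_{i=1}^N c_i.$$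
   Context: $Q(x)=\int_x^\infty\frac{1}{\sqrt{2\pi}}e^{-t^2/2}\,dt$ is the Gaussian tail function and $Q^{-1}$ its inverse. $S$ denotes the source, $D$ the destination, $1,\dots,N$ the relays, $g_{a,b}$ the channel gain of link $a\to b$, $\gamma$ the transmit SNR and $n$ the blocklength; $C_{a,b}$ and $V_{a,b}$ are the capacity and channel dispersion of the corresponding real AWGN link. *)

(* Defs.v *)
From Stdlib Require Import Reals List ClassicalEpsilon.
From Coquelicot Require Import Coquelicot.
Open Scope R_scope.

Definition Qf (x : R) : R :=
  RInt_gen (fun t => / sqrt (2 * PI) * exp (- (t ^ 2) / 2))
           (at_point x) (Rbar_locally p_infty).

Definition Qinv (e : R) : R := epsilon (inhabits 0) (fun y => Qf y = e).

Definition log2 (x : R) : R := ln x / ln 2.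

Definition Ccap (rho : R) : R := / 2 * log2 (1 + rho).
Definition Vdisp (rho : R) : R :=
  rho / 2 * ((2 + rho) / (1 + rho) ^ 2) * (log2 (exp 1)) ^ 2.

(* finite sum of f k for k = m, m+1, ..., m+len-1 *)
Definition sumR (m len : nat) (f : nat -> R) : R :=
  fold_right Rplus 0 (map f (seq m len)).

Section Coeffs.
Variables (N n : nat) (gamma : R) (gS gD : nat -> R).

Definition CSD_S (k : nat) := Ccap (gS k * gamma).
Definition VSD_S (k : nat) := Vdisp (gS k * gamma).
Definition CSD_D (k : nat) := Ccap (gD k * gamma).
Definition VSD_D (k : nat) := Vdisp (gD k * gamma).

(* a_{ij}, b_{ij} for 1 <= i <= N, i <= j <= N+1 *)
Definition acoef (i j : nat) : R :=
  if (j <=? N)%nat then sqrt (VSD_S i / VSD_S j)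
  else sqrt (VSD_S i / VSD_D i).
Definition bcoef (i j : nat) : R :=
  if (j <=? N)%nat then sqrt (INR n / VSD_S j) * (CSD_S j - CSD_S i)
  else sqrt (INR n / VSD_D i) * (CSD_D i - CSD_S i).
Definition ccoef (i : nat) : R := sqrt (VSD_S i).

Definition constr (eps : R) (x : nat -> R) : R :=
  sumR 1 N (fun i => sumR i (N + 2 - i) (fun j => Qf (acoef i j * x i + bcoef i j)))
  - eps.

Definition objective (x : nat -> R) : R := sumR 1 N (fun i => ccoef i * x i).

Definition feasible (eps : R) (x : nat -> R) : Prop :=
  constr eps x = 0 /\ (forall i, (1 <= i <= N)%nat -> 0 <= x i).

Definition v0 (eps : R) : Rbar :=
  Glb_Rbar (fun v => exists x, feasible eps x /\ v = objective x).

End Coeffs.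

(* Main.v *)
Require Import Defs.
From Stdlib Require Import Reals List Lra Lia FunctionalExtensionality ClassicalEpsilon.
From Coquelicot Require Import Coquelicot.
Open Scope R_scope.

Definition g (t : R) : R := exp (- (t ^ 2) / 2).
Definition G (y : R) : R := RInt g 0 y.
Definition E (u t : R) : R := exp (- (u ^ 2 * (1 + t ^ 2)) / 2) / (1 + t ^ 2).
Definition K (u : R) : R := RInt (fun t => E u t) 0 1.
Definition dE (u t : R) : R := - u * exp (- (u ^ 2 * (1 + t ^ 2)) / 2).

Lemma g_cont t : continuous g t.
Proof. apply (ex_derive_continuous (V:=R_NormedModule)). unfold g. auto_derive. easy. Qed.

Lemma g_pos t : 0 < g t.
Proof. apply exp_pos. Qed.

Lemma ex_RInt_g a b : ex_RInt g a b.
Proof. apply (ex_RInt_continuous (V:=R_CompleteNormedModule)). intros; apply g_cont. Qed.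

Lemma E_derive u t : is_derive (fun z => E z t) u (dE u t).
Proof.
  unfold E, dE. auto_derive.
  - nra.
  - replace (- (u * (u * 1) * (1 + t * (t * 1))) * / 2) with (- (u ^ 2 * (1 + t ^ 2)) / 2) by (simpl; field).
    set (X := exp _). field. nra.
Qed.

Lemma dE_cont u t : continuity_2d_pt (fun u v => Derive (fun z => E z v) u) u t.
Proof.
  apply continuity_2d_pt_ext with (f := dE).
  { intros x y. symmetry. apply is_derive_unique. apply E_derive. }
  unfold dE.
  apply continuity_2d_pt_mult.
  - apply continuity_2d_pt_opp. apply continuity_2d_pt_id1.
  - apply continuity_1d_2d_pt_comp.
    + apply derivable_continuous_pt. apply derivable_pt_exp.
    + apply continuity_2d_pt_mult.
      * apply continuity_2d_pt_opp.
        apply continuity_2d_pt_mult.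
        { simpl. apply continuity_2d_pt_mult. apply continuity_2d_pt_id1.
          apply continuity_2d_pt_mult. apply continuity_2d_pt_id1. apply continuity_2d_pt_const. }
        apply continuity_2d_pt_plus. apply continuity_2d_pt_const.
        simpl. apply continuity_2d_pt_mult. apply continuity_2d_pt_id2.
          apply continuity_2d_pt_mult. apply continuity_2d_pt_id2. apply continuity_2d_pt_const.
      * apply continuity_2d_pt_const.
Qed.
Lemma E_cont u t : continuous (fun t => E u t) t.
Proof. apply (ex_derive_continuous (V:=R_NormedModule)). unfold E. auto_derive. nra. Qed.

Lemma ex_RInt_E u a b : ex_RInt (fun t => E u t) a b.
Proof. apply (ex_RInt_continuous (V:=R_CompleteNormedModule)). intros; apply E_cont. Qed.

Lemma K_derive u : is_derive K u (RInt (fun t => dE u t) 0 1).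
Proof.
  unfold K.
  assert (H := is_derive_RInt_param (fun u t => E u t) 0 1 u).
  rewrite (RInt_ext (fun t => dE u t) (fun t => Derive (fun z => E z t) u)).
  2:{ intros x _. symmetry. apply is_derive_unique. apply E_derive. }
  apply H.
  - apply filter_forall. intros x t _. eexists. apply E_derive.
  - intros t _. apply dE_cont.
  - apply filter_forall. intros y. apply ex_RInt_E.
Qed.

Lemma int_dE u : RInt (fun t => dE u t) 0 1 = - g u * G u.
Proof.
  rewrite (RInt_ext (fun t => dE u t) (fun t => scal (- g u) (scal u (g (u * t + 0))))).
  2:{ intros x _. unfold dE, g, scal; simpl; unfold mult; simpl.
      replace (- (u ^ 2 * (1 + x ^ 2)) / 2) with (- (u ^ 2) / 2 + - ((u * x + 0) ^ 2) / 2) by field.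
      replace (exp (- (u*(u*1)*(1+x*(x*1)))/2)) with (exp (- (u*(u*1))/2) * exp (- ((u*x+0)*((u*x+0)*1))/2)). ring.
      rewrite <- exp_plus. f_equal. field. }
  rewrite (RInt_scal (V:=R_CompleteNormedModule)).
  2:{ apply (ex_RInt_continuous (V:=R_CompleteNormedModule)). intros z _.
      apply (ex_derive_continuous (V:=R_NormedModule)). unfold g, scal; simpl; unfold mult; simpl.
      auto_derive. easy. }
  rewrite (RInt_comp_lin (V:=R_CompleteNormedModule)). 2: apply ex_RInt_g.
  unfold G, scal; simpl; unfold mult; simpl.
  replace (u * 0 + 0) with 0 by ring. replace (u * 1 + 0) with u by ring. reflexivity.
Qed.

Lemma G_derive u : is_derive G u (g u).
Proof.
  apply (is_derive_RInt (V:=R_NormedModule) g G 0 u).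
  - apply filter_forall. intros b. unfold G. apply (RInt_correct (V:=R_CompleteNormedModule)). apply ex_RInt_g.
  - apply g_cont.
Qed.

Lemma h_derive u : is_derive (fun u => G u ^ 2 + 2 * K u) u 0.
Proof.
  assert (H1 := G_derive u). assert (H2 := K_derive u). rewrite int_dE in H2.
  auto_derive.
  - split. eexists; exact H1. split. eexists; exact H2. easy.
  - change (fun x : R => G x) with G. change (fun x : R => K x) with K.
    rewrite (is_derive_unique _ _ _ H1), (is_derive_unique _ _ _ H2). ring.
Qed.

Lemma K0 : K 0 = PI / 4.
Proof.
  unfold K. rewrite (RInt_ext _ (fun t => / (1 + t ^ 2))).
  2:{ intros x _. unfold E. replace (- (0 ^ 2 * (1 + x ^ 2)) / 2) with 0 by field.
      rewrite exp_0. unfold Rdiv. apply Rmult_1_l. }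
  rewrite <- atan_1.
  apply is_RInt_unique.
  replace (atan 1) with (minus (atan 1) (atan 0)).
  2:{ rewrite atan_0. unfold minus, plus, opp; simpl. ring. }
  apply (is_RInt_derive (V:=R_CompleteNormedModule)).
  - intros x _. replace (/ (1 + x ^ 2)) with (/ (1 + x²)). apply is_derive_atan.
    unfold Rsqr. simpl. f_equal. ring.
  - intros x _. apply (ex_derive_continuous (V:=R_NormedModule)). auto_derive. nra.
Qed.

Lemma h_const u : G u ^ 2 + 2 * K u = PI / 2.
Proof.
  assert (H0 : G 0 ^ 2 + 2 * K 0 = PI / 2).
  { unfold G at 1. rewrite RInt_point. rewrite K0. unfold zero; simpl. field. }
  destruct (Rtotal_order u 0) as [Hu|[Hu|Hu]].
  - rewrite <- H0. apply (eq_is_derive (V:=R_NormedModule) (fun u => G u ^ 2 + 2 * K u)).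
    + intros; apply h_derive.
    + exact Hu.
  - subst; exact H0.
  - rewrite <- H0. symmetry. apply (eq_is_derive (V:=R_NormedModule) (fun u => G u ^ 2 + 2 * K u)).
    + intros; apply h_derive.
    + exact Hu.
Qed.

Lemma exp_mono a b : a <= b -> exp a <= exp b.
Proof. intros [H|H]. left; apply exp_increasing; exact H. subst; lra. Qed.

Lemma K_bounds u : 0 <= K u <= exp (- (u ^ 2) / 2).
Proof.
  split.
  - apply RInt_ge_0. lra. apply ex_RInt_E. intros x _. unfold E.
    apply Rlt_le, Rdiv_lt_0_compat. apply exp_pos. nra.
  - unfold K. replace (exp (- (u ^ 2) / 2)) with (RInt (fun _ => exp (- (u ^ 2) / 2)) 0 1).
    2:{ rewrite RInt_const. unfold scal; simpl; unfold mult; simpl. ring. }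
    apply RInt_le. lra. apply ex_RInt_E. apply (ex_RInt_const (V:=R_CompleteNormedModule)).
    intros x _. unfold E.
    assert (H1 : exp (- (u ^ 2 * (1 + x ^ 2)) / 2) <= exp (- (u ^ 2) / 2)).
    { apply exp_mono. nra. }
    assert (H2 : 0 < exp (- (u ^ 2 * (1 + x ^ 2)) / 2)) by apply exp_pos.
    apply Rle_trans with (exp (- (u ^ 2 * (1 + x ^ 2)) / 2)); [|exact H1].
    unfold Rdiv. rewrite <- (Rmult_1_r (exp _)) at 2. apply Rmult_le_compat_l. lra.
    rewrite <- Rinv_1. apply Rinv_le_contravar; nra.
Qed.

Lemma lim_quad : is_lim (fun u => - (u ^ 2) / 2) p_infty m_infty.
Proof.
  intros P [M HM]. exists (2 * Rabs M + 1). intros x Hx. apply HM.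
  assert (Rabs M >= - M) by (unfold Rabs; destruct Rcase_abs; lra).
  assert (0 <= Rabs M) by apply Rabs_pos. nra.
Qed.

Lemma K_lim : filterlim K (Rbar_locally p_infty) (locally 0).
Proof.
  apply (filterlim_le_le (fun _ => 0) K (fun u => exp (- (u ^ 2) / 2)) (Finite 0)).
  - apply filter_forall. apply K_bounds.
  - apply filterlim_const.
  - apply (is_lim_comp exp (fun u => - (u ^ 2) / 2) p_infty 0 m_infty).
    apply is_lim_exp_m. apply lim_quad.
    exists 0. intros; discriminate.
Qed.

Lemma G_nonneg u : 0 <= u -> 0 <= G u.
Proof. intros Hu. apply RInt_ge_0. exact Hu. apply ex_RInt_g. intros; apply Rlt_le, g_pos. Qed.

Lemma G_lim : filterlim G (Rbar_locally p_infty) (locally (sqrt (PI / 2))).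
Proof.
  apply (filterlim_ext_loc (fun u => sqrt (PI / 2 - 2 * K u))).
  - exists 0. intros u Hu. rewrite <- (h_const u).
    replace (G u ^ 2 + 2 * K u - 2 * K u) with (G u ^ 2) by ring.
    apply sqrt_pow2. apply G_nonneg. lra.
  - apply (filterlim_comp _ _ _ K (fun z => sqrt (PI / 2 - 2 * z)) _ (locally 0)).
    apply K_lim.
    replace (sqrt (PI / 2)) with (sqrt (PI / 2 - 2 * 0)) by (f_equal; ring).
    apply (proj1 (continuity_pt_filterlim (fun z => sqrt (PI / 2 - 2 * z)) 0)).
    apply (continuity_pt_comp (fun z => PI / 2 - 2 * z) sqrt).
    + apply derivable_continuous_pt. reg.
    + apply continuity_pt_sqrt. assert (PI > 0) by apply PI_RGT_0. lra.
Qed.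

Definition ff (t : R) : R := / sqrt (2 * PI) * exp (- (t ^ 2) / 2).

Lemma ff_cont t : continuous ff t.
Proof. apply (ex_derive_continuous (V:=R_NormedModule)). unfold ff. auto_derive. easy. Qed.

Lemma ex_RInt_ff a b : ex_RInt ff a b.
Proof. apply (ex_RInt_continuous (V:=R_CompleteNormedModule)). intros; apply ff_cont. Qed.

Lemma F_eq y : RInt ff 0 y = / sqrt (2 * PI) * G y.
Proof.
  rewrite (RInt_ext ff (fun t => scal (/ sqrt (2 * PI)) (g t))).
  2:{ intros; reflexivity. }
  rewrite (RInt_scal (V:=R_CompleteNormedModule)). reflexivity. apply ex_RInt_g.
Qed.

Lemma half_eq : / sqrt (2 * PI) * sqrt (PI / 2) = 1 / 2.
Proof.
  assert (HP : PI > 0) by apply PI_RGT_0.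
  assert (Hs : 0 < sqrt (PI / 2)) by (apply sqrt_lt_R0; lra).
  replace (2 * PI) with (2 ^ 2 * (PI / 2)) by field.
  rewrite sqrt_mult by nra. rewrite sqrt_pow2 by lra. field. lra.
Qed.

Lemma F_lim : filterlim (fun y => RInt ff 0 y) (Rbar_locally p_infty) (locally (1 / 2)).
Proof.
  apply (filterlim_ext (fun y => / sqrt (2 * PI) * G y)).
  { intros; symmetry; apply F_eq. }
  rewrite <- half_eq.
  apply (filterlim_comp _ _ _ G (fun z => / sqrt (2 * PI) * z) _ (locally (sqrt (PI / 2)))).
  apply G_lim.
  apply (proj1 (continuity_pt_filterlim (fun z => / sqrt (2 * PI) * z) _)).
  apply derivable_continuous_pt. reg.
Qed.

Lemma F_derive x : is_derive (fun y => RInt ff 0 y) x (ff x).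
Proof.
  apply (is_derive_RInt (V:=R_NormedModule) ff _ 0 x).
  - apply filter_forall. intros b. apply (RInt_correct (V:=R_CompleteNormedModule)). apply ex_RInt_ff.
  - apply ff_cont.
Qed.

Lemma Qf_eq x : Qf x = 1 / 2 - RInt ff 0 x.
Proof.
  unfold Qf. apply is_RInt_gen_unique.
  set (F := fun y => RInt ff 0 y).
  assert (HD : Derive F = ff).
  { apply functional_extensionality. intros t. apply is_derive_unique. apply F_derive. }
  change (fun t => / sqrt (2 * PI) * exp (- t ^ 2 / 2)) with ff.
  rewrite <- HD.
  change (1 / 2 - RInt ff 0 x) with (1 / 2 - F x).
  apply is_RInt_gen_Derive.
  - apply filter_forall. intros ab t _. eexists. apply F_derive.
  - apply filter_forall. intros ab t _. rewrite HD. apply ff_cont.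
  - intros P HP. unfold filtermap, at_point. apply locally_singleton. exact HP.
  - apply F_lim.
Qed.

Lemma Qf0 : Qf 0 = 1 / 2.
Proof. rewrite Qf_eq, RInt_point. unfold zero; simpl. ring. Qed.

Lemma Qf_decr x y : x < y -> Qf y < Qf x.
Proof.
  intros Hxy. rewrite !Qf_eq.
  rewrite <- (RInt_Chasles (V:=R_CompleteNormedModule) ff 0 x y) by apply ex_RInt_ff.
  assert (0 < RInt ff x y).
  { apply RInt_gt_0. exact Hxy. intros; unfold ff.
    apply Rmult_lt_0_compat. apply Rinv_0_lt_compat, sqrt_lt_R0.
    assert (PI > 0) by apply PI_RGT_0. lra. apply exp_pos.
    intros; apply ff_cont. }
  unfold plus; simpl. lra.
Qed.

Lemma Qf_nonneg x : 0 <= Qf x.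
Proof.
  rewrite Qf_eq.
  destruct (Rle_or_lt (RInt ff 0 x) (1/2)) as [H|H]. lra. exfalso.
  set (e := RInt ff 0 x - 1/2).
  assert (He : 0 < e) by (unfold e; lra).
  destruct (F_lim (ball (1/2) e) (locally_ball (1/2) (mkposreal e He))) as [M HM].
  set (y := Rmax M x + 1).
  assert (Hy : M < y) by (unfold y; generalize (Rmax_l M x); lra).
  specialize (HM y Hy). change (ball (1/2) e (RInt ff 0 y)) in HM.
  unfold ball in HM; simpl in HM; unfold AbsRing_ball, abs, minus, plus, opp in HM; simpl in HM.
  assert (Hxy : x < y) by (unfold y; generalize (Rmax_r M x); lra).
  assert (Hlt := Qf_decr x y Hxy). rewrite !Qf_eq in Hlt.
  apply Rabs_def2 in HM. unfold e in HM. lra.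
Qed.

Lemma Qf_ge_half x : x <= 0 -> 1 / 2 <= Qf x.
Proof.
  intros [H|H]. rewrite <- Qf0. left. apply Qf_decr. exact H.
  subst. rewrite Qf0. lra.
Qed.

Lemma Qf_cont (eps : R) : continuity (fun z => eps - Qf z).
Proof.
  intros z.
  apply continuity_pt_ext with (f := fun z => eps - (1/2 - RInt ff 0 z)).
  { intros t. rewrite Qf_eq. reflexivity. }
  apply continuity_pt_minus. apply continuity_pt_const. intros a b; reflexivity.
  apply continuity_pt_minus. apply continuity_pt_const. intros a b; reflexivity.
  apply (proj2 (continuity_pt_filterlim _ _)).
  apply (ex_derive_continuous (V:=R_NormedModule)). eexists. apply F_derive.
Qed.

Lemma sumR_S m len F : sumR m (S len) F = F m + sumR (S m) len F.
Proof. reflexivity. Qed.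

Lemma sumR_nonneg m len F : (forall k, (m <= k < m + len)%nat -> 0 <= F k) -> 0 <= sumR m len F.
Proof.
  revert m. induction len; intros m H. unfold sumR; simpl; lra.
  rewrite sumR_S. apply Rplus_le_le_0_compat. apply H; lia. apply IHlen. intros; apply H; lia.
Qed.

Lemma sumR_ge_term m len F k : (forall k, (m <= k < m + len)%nat -> 0 <= F k) ->
  (m <= k < m + len)%nat -> F k <= sumR m len F.
Proof.
  revert m. induction len; intros m H Hk. lia.
  rewrite sumR_S. destruct (Nat.eq_dec k m) as [->|Hne].
  - assert (0 <= sumR (S m) len F) by (apply sumR_nonneg; intros; apply H; lia). lra.
  - assert (F k <= sumR (S m) len F) by (apply IHlen; [intros; apply H; lia| lia]).
    assert (0 <= F m) by (apply H; lia). lra.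
Qed.

Lemma sumR_le m len F H : (forall k, (m <= k < m + len)%nat -> F k <= H k) ->
  sumR m len F <= sumR m len H.
Proof.
  revert m. induction len; intros m Hk. unfold sumR; simpl; lra.
  rewrite !sumR_S. apply Rplus_le_compat. apply Hk; lia. apply IHlen. intros; apply Hk; lia.
Qed.

Lemma sumR_mulr m len F a : sumR m len (fun i => F i * a) = a * sumR m len F.
Proof.
  revert m. induction len; intros m. unfold sumR; simpl; ring.
  rewrite !sumR_S, IHlen. ring.
Qed.

Lemma Vdisp_neq0 rho : 0 < rho -> Vdisp rho <> 0.
Proof.
  intros Hr. unfold Vdisp.
  assert (Hl : log2 (exp 1) <> 0).
  { unfold log2. rewrite ln_exp. assert (0 < ln 2).
    { rewrite <- ln_1. apply ln_increasing; lra. }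
    apply Rmult_integral_contrapositive_currified. lra. apply Rinv_neq_0_compat. lra. }
  apply Rmult_integral_contrapositive_currified.
  apply Rmult_integral_contrapositive_currified. lra.
  apply Rmult_integral_contrapositive_currified. lra.
  apply Rinv_neq_0_compat. apply pow_nonzero. lra.
  apply pow_nonzero. exact Hl.
Qed.

Lemma Q_le_constr (N n : nat) (gamma : R) (gS gD : nat -> R) (eps : R) (x : nat -> R) i :
  0 < gamma -> (forall k, (1 <= k <= N)%nat -> 0 < gS k) -> (1 <= i <= N)%nat ->
  Qf (x i) <= constr N n gamma gS gD eps x + eps.
Proof.
  intros Hg HS Hi. unfold constr.
  replace (sumR 1 N (fun i => sumR i (N + 2 - i)
       (fun j => Qf (acoef N gamma gS gD i j * x i + bcoef N n gamma gS gD i j))) - eps + eps)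
    with (sumR 1 N (fun i => sumR i (N + 2 - i)
       (fun j => Qf (acoef N gamma gS gD i j * x i + bcoef N n gamma gS gD i j)))) by ring.
  eapply Rle_trans.
  2:{ apply (sumR_ge_term 1 N _ i). intros k _. apply sumR_nonneg. intros; apply Qf_nonneg. lia. }
  eapply Rle_trans.
  2:{ apply (sumR_ge_term i (N + 2 - i) _ i). intros; apply Qf_nonneg. lia. }
  right. f_equal.
  unfold acoef, bcoef.
  assert (Hb : (i <=? N)%nat = true) by (apply Nat.leb_le; lia). rewrite Hb.
  assert (HV : VSD_S gamma gS i <> 0).
  { unfold VSD_S. apply Vdisp_neq0. apply Rmult_lt_0_compat. apply HS; lia. exact Hg. }
  replace (VSD_S gamma gS i / VSD_S gamma gS i) with 1 by (field; exact HV).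
  rewrite sqrt_1. ring.
Qed.

Theorem lemma4 (N n : nat) (gamma : R) (gS gD : nat -> R) (eps x1 : R) :
  (1 <= N)%nat -> (1 <= n)%nat -> 0 < gamma ->
  (forall k, (1 <= k <= N)%nat -> 0 < gS k) ->
  (forall k, (1 <= k <= N)%nat -> 0 < gD k) ->
  (forall k, (1 <= k < N)%nat -> gS k <= gS (S k)) ->
  0 < eps < / 2 ->
  constr N n gamma gS gD eps (fun _ => x1) = 0 ->
  Rbar_le (Finite (Qinv eps * sumR 1 N (ccoef gamma gS)))
          (v0 N n gamma gS gD eps) /\
  Rbar_le (v0 N n gamma gS gD eps)
          (Finite (x1 * sumR 1 N (ccoef gamma gS))).
Proof.
  intros HN Hn Hg HS HD Hmono Heps Hc.
  assert (HQx1 : Qf x1 <= eps).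
  { generalize (Q_le_constr N n gamma gS gD eps (fun _ => x1) 1 Hg HS ltac:(lia)). lra. }
  assert (Hx1 : 0 < x1).
  { destruct (Rle_or_lt x1 0) as [H|H]; [|exact H].
    generalize (Qf_ge_half x1 H). lra. }
  assert (Hobj : forall q, objective N gamma gS (fun _ => q) = q * sumR 1 N (ccoef gamma gS)).
  { intros q. unfold objective. apply sumR_mulr. }
  destruct (Glb_Rbar_correct (fun v => exists x, feasible N n gamma gS gD eps x /\ v = objective N gamma gS x)) as [Hlb Hglb].
  unfold v0. split.
  -
    assert (Hex : exists y, Qf y = eps).
    { destruct (Req_dec (Qf x1) eps) as [He|He]. exists x1; exact He.
      destruct (IVT (fun z => eps - Qf z) 0 x1 (Qf_cont eps) Hx1) as [z [_ Hz]].
      rewrite Qf0. lra. lra. exists z. lra. }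
    assert (Hq : Qf (Qinv eps) = eps).
    { unfold Qinv. apply (epsilon_spec (inhabits 0) (fun y => Qf y = eps)). exact Hex. }
    apply Hglb. intros v [x [[Hfx Hpos] ->]].
    simpl. rewrite <- Hobj. unfold objective.
    apply sumR_le. intros k Hk. apply Rmult_le_compat_l. apply sqrt_pos.
    destruct (Rle_or_lt (Qinv eps) (x k)) as [H|H]. exact H. exfalso.
    generalize (Qf_decr _ _ H) (Q_le_constr N n gamma gS gD eps x k Hg HS ltac:(lia)). lra.
  - apply Hlb. exists (fun _ => x1). split.
    + split. exact Hc. intros; lra.
    + symmetry. apply Hobj.
Qed.
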